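(* Let $\mathcal{S}=(Q,E,\delta,Q_0,\Sigma,\ell)$ be a labeled finite-state automaton, $Q_S\subset Q$ a set of secret states, and $K$ a positive integer with $K>2^{|Q|}-2$. Then $\mathcal{S}$ is infinite-step opaque with respect to $Q_S$ if and only if $\mathcal{S}$ is $K$-step opaque with respect to $Q_S$.
   Context: A labeled finite-state automaton is $\mathcal{S}=(Q,E,\delta,Q_0,\Sigma,\ell)$ with finite state set $Q$, finite event alphabet $E$, transition relation $\delta\subset Q\times E\times Q$, initial states $Q_0\subset Q$, finite output alphabet $\Sigma$, and labeling $\ell:E\to\Sigma\cup\{\epsilon\}$ ($\epsilon$ the empty word), extended morphically to event words. A run $q\xrightarrow{s}q'$ ($s\in E^*$) means a sequence of transitions from $q$ to $q'$ reading $s$ (the empty word gives $q=q'$). Infinite-step opacity: $\mathcal{S}$ is infinite-step opaque w.r.t. $Q_S$ if for every run $q_0\xrightarrow{s_1}q_1\xrightarrow{s_2}q_2$ with $q_0\in Q_0$ and $q_1\in Q_S$ there is a run $q_0'\xrightarrow{s_1'}q_1'\xrightarrow{s_2'}q_2'$ with $q_0'\in Q_0$, $q_1'\in Q\setminus Q_S$, $\ell(s_1)=\ell(s_1')$, $\ell(s_2)=\ell(s_2')$. $K$-step opacity ($K$ a positive integer): same as infinite-step opacity but the requirement is only imposed on runs with $|\ell(s_2)|\le K$. *)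

(* Defs.v *)
From mathcomp Require Import all_boot.
Set Implicit Arguments. Unset Strict Implicit. Unset Printing Implicit Defensive.

(* Q, E, Sigma are finite types; delta is a transition relation;
   Q0 a set of initial states; ell : E -> Sigma ∪ {epsilon}, encoded as
   option Sigma with None = epsilon. *)
Record LFSA := {
  st : finType;
  ev : finType;
  out : finType;
  delta : st -> ev -> st -> bool;
  init : {set st};
  lab : ev -> option out
}.

Definition labw (S : LFSA) (s : seq (ev S)) : seq (out S) := pmap (@lab S) s.

Inductive run (S : LFSA) : st S -> seq (ev S) -> st S -> Prop :=
| run_nil q : run q [::] q
| run_cons q e q1 s q' : delta q e q1 -> run q1 s q' -> run q (e :: s) q'.

Definition inf_step_opaque (S : LFSA) (QS : {set st S}) : Prop :=
  forall q0 q1 q2 s1 s2,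
    q0 \in init S -> q1 \in QS -> run q0 s1 q1 -> run q1 s2 q2 ->
    exists q0' q1' q2' s1' s2',
      [/\ q0' \in init S, q1' \notin QS, run q0' s1' q1', run q1' s2' q2' &
          labw s1 = labw s1' /\ labw s2 = labw s2'].

Definition K_step_opaque (S : LFSA) (QS : {set st S}) (K : nat) : Prop :=
  forall q0 q1 q2 s1 s2,
    q0 \in init S -> q1 \in QS -> run q0 s1 q1 -> run q1 s2 q2 ->
    size (labw s2) <= K ->
    exists q0' q1' q2' s1' s2',
      [/\ q0' \in init S, q1' \notin QS, run q0' s1' q1', run q1' s2' q2' &
          labw s1 = labw s1' /\ labw s2 = labw s2'].

(* Main.v *)
Require Import Defs.
From mathcomp Require Import all_boot.
From Stdlib Require Import Classical ClassicalEpsilon.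
From mathcomp Require Import zify.

Section Aux.
Variable S : LFSA.

Lemma run_cat (q p r : st S) s t : run q s p -> run p t r -> run q (s ++ t) r.
Proof. elim=> [//|q0 e q1 s' q' H _ IH] Ht; exact: run_cons H (IH Ht). Qed.

Lemma run_split (q q' : st S) s u v : run q s q' -> labw s = u ++ v ->
  exists p s1 s2, [/\ run q s1 p, labw s1 = u, run p s2 q' & labw s2 = v].
Proof.
move=> H; elim: H u => [q0|q0 e q1 s' q'' He Hr IH] u.
  case: u => [|a u] //=; case: v => // _; exists q0, [::], [::]; split=> //; constructor.
rewrite /labw /=; case Hl: (lab e) => [a|] /=.
  case: u => [|b u] /=.
    move=> Hv; exists q0, [::], (e :: s'); split=> //; first constructor.
      by econstructor; eauto.
    by rewrite /labw /= Hl.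
  case=> <- Hs; have [p [s1 [s2 [H1 H2 H3 H4]]]] := IH u Hs.
  exists p, (e :: s1), s2; split=> //; first by econstructor; eauto.
  by rewrite /labw /= Hl -H2.
move=> Hs; have [p [s1 [s2 [H1 H2 H3 H4]]]] := IH u Hs.
exists p, (e :: s1), s2; split=> //; first by econstructor; eauto.
by rewrite /labw /= Hl -H2.
Qed.

Definition produce (q : st S) (w : seq (out S)) :=
  exists s q', run q s q' /\ labw s = w.

Definition Tset (w : seq (out S)) : {set st S} :=
  [set q | if excluded_middle_informative (produce q w) then true else false].

Lemma TsetP q w : q \in Tset w <-> produce q w.
Proof.
rewrite inE; case: excluded_middle_informative => //; split=> //.
Qed.

Lemma pigeon (m : nat) (f : 'I_m.+1 -> {set st S}) : 2 ^ #|st S| < m.+1 ->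
  exists i j : 'I_m.+1, i < j /\ f i = f j.
Proof.
move=> Hm; apply: NNPP => Hn.
have inj : injective f.
  move=> i j Hij; apply: val_inj; apply/eqP; case: ltngtP => // Hlt.
  - by exfalso; apply: Hn; exists i, j.
  - by exfalso; apply: Hn; exists j, i.
have := card_imset [set: 'I_m.+1] inj.
rewrite cardsT card_ord => Hc.
have : #|f @: [set: 'I_m.+1]| <= #|powerset [set: st S]|.
  apply: subset_leq_card; apply/subsetP=> x _; rewrite powersetE; exact: subsetT.
by rewrite Hc card_powerset cardsT; lia.
Qed.

End Aux.
Arguments run_split {S q q' s u v}.
Arguments run_cat {S q p r s t}.
Arguments pigeon {S m}.

Theorem corollary2 (S : LFSA) (QS : {set st S}) (K : nat) :
  0 < K -> 2 ^ #|st S| - 2 < K ->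
  (inf_step_opaque QS <-> K_step_opaque QS K).
Proof.
move=> K0 HK; split.
  by move=> H q0 q1 q2 s1 s2 H0 H1 H2 H3 _; exact: H H0 H1 H2 H3.
move=> H.
suff: forall m q0 q1 q2 s1 s2,
    q0 \in init S -> q1 \in QS -> run q0 s1 q1 -> run q1 s2 q2 ->
    size (labw s2) <= m ->
    exists q0' q1' q2' s1' s2',
      [/\ q0' \in init S, q1' \notin QS, run q0' s1' q1', run q1' s2' q2' &
          labw s1 = labw s1' /\ labw s2 = labw s2'].
  move=> Hm q0 q1 q2 s1 s2 H0 H1 H2 H3; exact: (Hm _ q0 q1 q2 s1 s2 H0 H1 H2 H3 (leqnn _)).
elim=> [|m IH] q0 q1 q2 s1 s2 H0 H1 H2 H3 Hs.
  by apply: H H0 H1 H2 H3 _; lia.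
case: (leqP (size (labw s2)) m) => Hle; first exact: IH H0 H1 H2 H3 Hle.
case: (leqP (size (labw s2)) K) => HleK; first exact: H H0 H1 H2 H3 HleK.
set w := labw s2 in Hs Hle HleK *.
set n := size w.
pose f (i : 'I_n.+1) := Tset S (drop i w).
have [i [j [Hij Hf]]] : exists i j : 'I_n.+1, i < j /\ f i = f j.
  by apply: pigeon; rewrite /n; lia.
have Hw : labw s2 = take i w ++ drop i w by rewrite cat_take_drop.
have [p [sa [sb [Ha1 Ha2 Hb1 Hb2]]]] := run_split H3 Hw.
have : p \in f j by rewrite -Hf; apply/TsetP; exists sb, q2.
move/TsetP=> [sc [q3 [Hc1 Hc2]]].
have Hr := run_cat Ha1 Hc1.
have Hsz : size (labw (sa ++ sc)) <= m.
  rewrite /labw pmap_cat -/(labw sa) -/(labw sc) Ha2 Hc2 size_cat size_drop.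
  have Hi := ltn_ord i; have Hj := ltn_ord j.
  rewrite size_takel; rewrite -/n; lia.
have [q0' [q1' [q2' [s1' [s2' [G0 G1 G2 G3 [G4 G5]]]]]]] := IH _ _ _ _ _ H0 H1 H2 Hr Hsz.
have Hw' : labw s2' = take i w ++ drop j w.
  by rewrite -G5 /labw pmap_cat -/(labw sa) -/(labw sc) Ha2 Hc2.
have [r [x [y [Hx1 Hx2 Hy1 Hy2]]]] := run_split G3 Hw'.
have : r \in f i by rewrite Hf; apply/TsetP; exists y, q2'.
move/TsetP=> [z [q4 [Hz1 Hz2]]].
exists q0', q1', q4, s1', (x ++ z); split=> //; first exact: run_cat Hx1 Hz1.
split=> //; by rewrite /labw pmap_cat -/(labw x) -/(labw z) Hx2 Hz2 cat_take_drop.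
Qed.
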